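(* Let $G=(V,E)$ be an undirected graph with vertex set $V=\{v_1,\dots,v_n\}$ and edge set $E=\{e_{i_1j_1},\dots,e_{i_mj_m}\}$, where $e_{i_kj_k}$ joins $v_{i_k}$ and $v_{j_k}$. Each edge $e_{i_kj_k}$ carries a vector $C_{i_kj_k}\in\mathbb{R}^q$, and $\{p_\theta\}$ is a family of functions $\mathbb{R}^q\to(0,\infty)$ depending differentiably on a parameter vector $\theta\in\mathbb{R}^{n_\theta}$. For each $\theta$, let $G_\theta$ be the weighted graph on $(V,E)$ with edge weights $w_{i_kj_k}=p_\theta(C_{i_kj_k})$, and let $L_\theta$ be its Laplacian. Let $S\subseteq V$ and let $F\in\mathbb{R}^{|S|\times|S|}$ be a given matrix with zero diagonal, with entries $F_{lk}$ indexed by $v_l,v_k\in S$. Define $$\mathcal{L}(\theta)=\|R_S(\theta)-F\|_F^2=\sum_{v_l,v_k\in S}\big(R_S(\theta)_{lk}-F_{lk}\big)^2,$$ where $R_S(\theta)_{lk}=b_{lk}^TL_\theta^+b_{lk}$ is the effective resistance between $v_l$ and $v_k$ in $G_\theta$. Let $J\in\mathbb{R}^{m\times n_\theta}$ be the Jacobian $J_{k,h}=\frac{\partial w_{i_kj_k}}{\partial\theta_h}$, and let $B\in\mathbb{R}^{m\times n}$ be the edge–vertex incidence matrix whose $k$-th row is $e_{i_k}-e_{j_k}$ (standard basis vectors of $\mathbb{R}^n$). Then $$\nabla_\theta\mathcal{L}=\sum_{v_l,v_k\in S}\big(F_{lk}-b_{lk}^TL_\theta^+b_{lk}\big)\cdot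 2J^T\,(BL_\theta^+b_{lk})^{\circ 2},$$ where $^{\circ 2}$ denotes the entrywise square of a vector.
   Context: For a weighted undirected graph with weights $w_{ij}$ on edges $e_{ij}$, the degree matrix $D$ is diagonal with $D_{ii}=\sum_{j:e_{ij}\in E}w_{ij}$, the adjacency matrix $A$ has $A_{ij}=A_{ji}=w_{ij}$ for $e_{ij}\in E$ and $0$ otherwise, and the Laplacian is $L=D-A$. $L^+$ denotes the Moore–Penrose pseudoinverse. For nodes $v_i,v_j$, $b_{ij}\in\mathbb{R}^n$ is the vector with $1$ in position $i$, $-1$ in position $j$, and $0$ elsewhere; the effective resistance between $v_i$ and $v_j$ is $R_{ij}=b_{ij}^TL^+b_{ij}$. $\|\cdot\|_F$ is the Frobenius norm. *)

(* Defs.v *)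
From HB Require Import structures.
From mathcomp Require Import all_boot all_order all_algebra.
From mathcomp Require Import all_classical all_reals all_analysis.
Set Implicit Arguments. Unset Strict Implicit. Unset Printing Implicit Defensive.
Import Order.TTheory GRing.Theory Num.Theory.
Import numFieldNormedType.Exports.
Local Open Scope ring_scope.

Section Graph.
Variable R : realType.

Definition is_MP_pinv n (A X : 'M[R]_n) : Prop :=
  [/\ A *m X *m A = A, X *m A *m X = X,
      (A *m X)^T = A *m X & (X *m A)^T = X *m A].

(* The Moore-Penrose pseudoinverse (it exists and is unique). *)
Definition MP_pinv n (A : 'M[R]_n) : 'M[R]_n := xget 0 (fun X => is_MP_pinv A X).

Definition degree_mx n m (ei ej : 'I_m -> 'I_n) (w : 'I_m -> R) : 'M[R]_n :=
  \matrix_(i, j) (if i == j then \sum_(k < m | (ei k == i) || (ej k == i)) w k else 0).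

Definition adjacency_mx n m (ei ej : 'I_m -> 'I_n) (w : 'I_m -> R) : 'M[R]_n :=
  \matrix_(i, j) \sum_(k < m | ((ei k == i) && (ej k == j)) || ((ei k == j) && (ej k == i))) w k.

Definition laplacian_mx n m (ei ej : 'I_m -> 'I_n) (w : 'I_m -> R) : 'M[R]_n :=
  degree_mx ei ej w - adjacency_mx ei ej w.

Definition bvec n (i j : 'I_n) : 'cV[R]_n := delta_mx i 0 - delta_mx j 0.

Definition eff_res n (L : 'M[R]_n) (i j : 'I_n) : R :=
  ((bvec i j)^T *m MP_pinv L *m bvec i j) 0 0.

Definition incidence_mx n m (ei ej : 'I_m -> 'I_n) : 'M[R]_(m, n) :=
  \matrix_(k, v) ((v == ei k)%:R - (v == ej k)%:R).

Definition basis_rv p (h : 'I_p) : 'rV[R]_p := delta_mx 0 h.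

End Graph.

(* Main.v *)
Require Import Defs.
From HB Require Import structures.
From mathcomp Require Import all_boot all_order all_algebra.
From mathcomp Require Import all_classical all_reals all_analysis.
From mathcomp Require Import ring lra.
Set Implicit Arguments. Unset Strict Implicit. Unset Printing Implicit Defensive.
Import Order.TTheory GRing.Theory Num.Theory.
Import numFieldNormedType.Exports.
Local Open Scope classical_set_scope.
Local Open Scope ring_scope.

Section LA.
Variable R : realType.

Lemma rv_norm0 r (x : 'rV[R]_r) : (x *m x^T) 0 0 = 0 -> x = 0.
Proof.
move=> H; apply/rowP => j; rewrite mxE.
have E : (x *m x^T) 0 0 = \sum_i x 0 i ^+ 2.
  by rewrite mxE; apply: eq_bigr => i _; rewrite mxE expr2.
move: H; rewrite E => /eqP; rewrite psumr_eq0 => [/allP/(_ j (mem_index_enum _))|i _]; last exact: sqr_ge0.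
by rewrite implyTb sqrf_eq0 => /eqP.
Qed.

Lemma gram_unit r c (K : 'M[R]_(r, c)) : row_free K -> K *m K^T \in unitmx.
Proof.
move=> fK; rewrite -row_free_unit; apply: inj_row_free => u H.
have : (u *m K) *m (u *m K)^T = 0 by rewrite trmx_mul !mulmxA -(mulmxA u K) H mul0mx.
move=> H2; have /eqP : u *m K = 0 by apply: rv_norm0; rewrite H2 mxE.
by rewrite (mulmx_free_eq0 _ fK) => /eqP.
Qed.

Definition projK r c (K : 'M[R]_(r, c)) := K^T *m invmx (K *m K^T) *m K.

Section Proj.
Variables (r c : nat) (K : 'M[R]_(r, c)).
Hypothesis fK : row_free K.
Local Notation P := (projK K).

Lemma projK_tr : P^T = P.
Proof. by rewrite /projK !trmx_mul trmxK trmx_inv trmx_mul trmxK mulmxA. Qed.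

Lemma projK_aux : K^T *m invmx (K *m K^T) *m K *m K^T = K^T.
Proof.
by rewrite -(mulmxA (K^T *m _)) -(mulmxA K^T) mulVmx ?mulmx1 // gram_unit.
Qed.

Lemma projK_id : P *m P = P.
Proof. by rewrite {1}/projK !mulmxA projK_aux. Qed.

Lemma projK_fix (D : 'M[R]_(1, r)) : (D *m K) *m P = D *m K.
Proof.
rewrite /projK !mulmxA -(mulmxA D) -(mulmxA D) mulmxV ?mulmx1 //.
exact: gram_unit.
Qed.
End Proj.

Lemma MP_unique n (A X Y : 'M[R]_n) : is_MP_pinv A X -> is_MP_pinv A Y -> X = Y.
Proof.
case=> [h1 h2 h3 h4] [g1 g2 g3 g4].
have eX : X *m A *m Y = X.
  have e1 : X *m A *m Y = X *m (A *m X)^T *m (A *m Y)^T by rewrite h3 g3 !mulmxA h2.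
  have e2 : X *m (A *m X)^T *m (A *m Y)^T = X *m (A *m X)^T.
    by rewrite -mulmxA -trmx_mul !mulmxA g1.
  by rewrite e1 e2 h3 mulmxA h2.
have eY : X *m A *m Y = Y.
  have e1 : X *m A *m Y = (X *m A)^T *m (Y *m A)^T *m Y by rewrite h4 g4 -{1}g2 !mulmxA.
  rewrite e1 -trmx_mul (_ : (Y *m A) *m (X *m A) = Y *m (A *m X *m A)); last by rewrite !mulmxA.
  by rewrite h1 g4 g2.
by rewrite -eX eY.
Qed.

Lemma MP_abstract n (L P : 'M[R]_n) : P *m P = P -> L *m P = 0 -> P *m L = 0 ->
  P^T = P -> (L + P) \in unitmx -> is_MP_pinv L (invmx (L + P) - P).
Proof.
move=> PP LP PL PT U; set M := L + P; set N := invmx M.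
have NM : N *m M = 1%:M := mulVmx U.
have MN : M *m N = 1%:M := mulmxV U.
have PM : P *m M = P by rewrite mulmxDr PL PP add0r.
have MPe : M *m P = P by rewrite mulmxDl LP PP add0r.
have PN : P *m N = P by rewrite -{1}PM -mulmxA MN mulmx1.
have NP : N *m P = P by rewrite -{1}MPe mulmxA NM mul1mx.
have LE : L = M - P by rewrite /M addrK.
have LX : L *m (N - P) = 1%:M - P.
  by rewrite LE mulmxBl !mulmxBr MN MPe PN PP subrr subr0.
have XL : (N - P) *m L = 1%:M - P.
  by rewrite LE mulmxBl !mulmxBr NM NP PM PP subrr subr0.
split.
- by rewrite LX mulmxBl mul1mx PL subr0.
- by rewrite XL mulmxBl mul1mx mulmxBr PN PP subrr subr0.
- by rewrite LX linearB /= trmx1 PT.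
- by rewrite XL linearB /= trmx1 PT.
Qed.

End LA.

Section Graph.
Variables (R : realType) (n m : nat) (ei ej : 'I_m -> 'I_n).
Hypothesis Hloop : forall k, ei k != ej k.
Local Notation B := (incidence_mx R ei ej).

Lemma lapE (w : 'I_m -> R) : laplacian_mx ei ej w = B^T *m diag_mx (\row_k w k) *m B.
Proof.
apply/matrixP => i j; rewrite mul_mx_diag !mxE.
under [RHS]eq_bigr do rewrite !mxE.
rewrite big_mkcond /= [X in _ - X]big_mkcond /=.
have -> : (if i == j then \sum_(k < m) (if (ei k == i) || (ej k == i) then w k else 0) else 0)
   = \sum_(k < m) (if i == j then (if (ei k == i) || (ej k == i) then w k else 0) else 0).
  by case: (i == j) => //; rewrite big1.
rewrite -sumrB; apply: eq_bigr => k _.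
move: (Hloop k); move: (ei k) (ej k) => a b ab.
rewrite (eq_sym a i) (eq_sym b i) (eq_sym a j) (eq_sym b j).
case: (eqVneq i j) => [<-|nij].
{ case: (eqVneq i a) => [ia|nia]; case: (eqVneq i b) => [ib|nib] /=.
  - by move: ab; rewrite -ia -ib eqxx.
  all: by rewrite /= ?subr0 ?sub0r ?mulr1 ?mul1r ?mulN1r ?mulrN1 ?opprK ?mulr0 ?mul0r ?subrr. }
case: (eqVneq i a) => [ia|nia]; case: (eqVneq i b) => [ib|nib];
  case: (eqVneq j a) => [ja|nja]; case: (eqVneq j b) => [jb|njb] /=.
all: try (subst; first [by rewrite eqxx in ab | by rewrite eqxx in nij]).
all: by rewrite /= ?subr0 ?sub0r ?mulr1 ?mul1r ?mulN1r ?mulrN1 ?opprK ?mulr0 ?mul0r ?subrr ?oppr0.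
Qed.

Lemma lap_tr (w : 'I_m -> R) : (laplacian_mx ei ej w)^T = laplacian_mx ei ej w.
Proof. by rewrite lapE !trmx_mul trmxK tr_diag_mx mulmxA. Qed.

Lemma quad_diag (y : 'rV[R]_m) d :
  (y *m diag_mx d *m y^T) 0 0 = \sum_k d 0 k * y 0 k ^+ 2.
Proof.
rewrite mul_mx_diag mxE; apply: eq_bigr => k _; rewrite !mxE.
by rewrite [_ * d 0 k]mulrC -mulrA expr2.
Qed.

Local Notation Kb := (row_base (kermx B^T)).
Local Notation Pb := (projK Kb).

Lemma KbB : Kb *m B^T = 0.
Proof. by apply/sub_kermxP; rewrite eq_row_base submx_refl. Qed.

Lemma BPb : B *m Pb = 0.
Proof.
rewrite /projK !mulmxA (_ : B *m Kb^T = 0) ?mul0mx //.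
by apply: trmx_inj; rewrite trmx_mul trmxK KbB trmx0.
Qed.

Lemma PbBt : Pb *m B^T = 0.
Proof. by rewrite -(projK_tr Kb) -trmx_mul BPb trmx0. Qed.

Lemma Pb_fix (u : 'rV[R]_n) : u *m B^T = 0 -> u *m Pb = u.
Proof.
move/sub_kermxP => H; have : (u <= Kb)%MS by rewrite eq_row_base.
case/submxP => D ->.
exact: (projK_fix (row_base_free (kermx B^T))).
Qed.

Lemma LPb (w : 'I_m -> R) : laplacian_mx ei ej w *m Pb = 0.
Proof. by rewrite lapE -mulmxA BPb mulmx0. Qed.

Lemma PbL (w : 'I_m -> R) : Pb *m laplacian_mx ei ej w = 0.
Proof. by rewrite lapE !mulmxA PbBt !mul0mx. Qed.

Lemma M_unit (w : 'I_m -> R) : (forall k, 0 < w k) -> laplacian_mx ei ej w + Pb \in unitmx.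
Proof.
move=> wpos; rewrite -row_free_unit; apply: inj_row_free => u Hu.
have PP := projK_id (row_base_free (kermx B^T)).
have uP : u *m Pb = 0.
  have : u *m (laplacian_mx ei ej w + Pb) *m Pb = 0 by rewrite Hu mul0mx.
  by rewrite mulmxDr mulmxDl -(mulmxA u (laplacian_mx _ _ w)) -(mulmxA u Pb Pb) LPb PP mulmx0 add0r.
have uL : u *m laplacian_mx ei ej w = 0 by move: Hu; rewrite mulmxDr uP addr0.
have uB : u *m B^T = 0.
  have : (u *m laplacian_mx ei ej w *m u^T) 0 0 = 0 by rewrite uL mul0mx mxE.
  rewrite lapE !mulmxA -(mulmxA _ B) (_ : B *m u^T = (u *m B^T)^T); last first.
    by rewrite trmx_mul trmxK.
  rewrite quad_diag => /eqP; rewrite psumr_eq0 => [/allP H|k _]; last first.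
    by rewrite mxE mulr_ge0 ?sqr_ge0 ?ltW.
  apply/rowP => k; move: (H k (mem_index_enum _)).
  rewrite implyTb mxE mulf_eq0 sqrf_eq0 (gt_eqF (wpos k)) /= => /eqP ->.
  by rewrite mxE.
by rewrite -(Pb_fix uB) uP.
Qed.

Lemma pinv_lap (w : 'I_m -> R) : (forall k, 0 < w k) ->
  MP_pinv (laplacian_mx ei ej w) = invmx (laplacian_mx ei ej w + Pb) - Pb.
Proof.
move=> wpos.
have H := MP_abstract (projK_id (row_base_free (kermx B^T))) (LPb w) (PbL w)
  (projK_tr Kb) (M_unit wpos).
rewrite /MP_pinv; apply: (xget_unique _ H) => y Hy; exact: MP_unique Hy H.
Qed.

End Graph.

Section CvgHelpers.
Variable R : realType.
Context {T : Type} (F : set_system T) {FF : Filter F}.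

Lemma cvg_sumR (I : finType) (P : pred I) (f : I -> T -> R) (a : I -> R) :
  (forall i, f i @ F --> a i) ->
  (fun t => \sum_(i | P i) f i t) @ F --> \sum_(i | P i) a i.
Proof.
move=> H; apply: cvg_big => //. all: first [exact: add_continuous | by move=> i _; exact: H].
Qed.

Lemma cvg_prodR (I : finType) (P : pred I) (f : I -> T -> R) (a : I -> R) :
  (forall i, f i @ F --> a i) ->
  (fun t => \prod_(i | P i) f i t) @ F --> \prod_(i | P i) a i.
Proof.
move=> H; apply: cvg_big => //. all: first [exact: mul_continuous | by move=> i _; exact: H].
Qed.

Definition mxcvg p q (A : T -> 'M[R]_(p, q)) (A0 : 'M[R]_(p, q)) :=
  forall i j, (fun t => A t i j) @ F --> A0 i j.

Lemma mxcvg_cst p q (A0 : 'M[R]_(p, q)) : mxcvg (fun _ => A0) A0.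
Proof. by move=> i j; exact: cvg_cst. Qed.

Lemma mxcvg_mul p q r (A : T -> 'M[R]_(p, q)) (C : T -> 'M[R]_(q, r)) A0 C0 :
  mxcvg A A0 -> mxcvg C C0 -> mxcvg (fun t => A t *m C t) (A0 *m C0).
Proof.
move=> HA HC i j; under eq_cvg do rewrite mxE; rewrite mxE.
by apply: cvg_sumR => k; apply: cvgM; [exact: HA | exact: HC].
Qed.

Lemma mxcvg_add p q (A C : T -> 'M[R]_(p, q)) A0 C0 :
  mxcvg A A0 -> mxcvg C C0 -> mxcvg (fun t => A t + C t) (A0 + C0).
Proof.
move=> HA HC i j; under eq_cvg do rewrite mxE; rewrite mxE.
by apply: cvgD; [exact: HA | exact: HC].
Qed.

Lemma cvg_det k (A : T -> 'M[R]_k) A0 :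
  mxcvg A A0 -> (fun t => \det (A t)) @ F --> \det A0.
Proof.
move=> H; rewrite /determinant; apply: cvg_sumR => s.
apply: cvgM; first exact: cvg_cst.
by apply: cvg_prodR => i; exact: H.
Qed.

Lemma mxcvg_inv k (A : T -> 'M[R]_k) A0 :
  (forall t, A t \in unitmx) -> A0 \in unitmx ->
  mxcvg A A0 -> mxcvg (fun t => invmx (A t)) (invmx A0).
Proof.
move=> HU H0 H i j.
under eq_cvg do rewrite /invmx HU mxE.
rewrite /invmx H0 mxE.
apply: cvgM.
  apply: cvgV; first by rewrite -unitfE -unitmxE.
  exact: cvg_det.
under eq_cvg do rewrite mxE /cofactor.
rewrite mxE /cofactor; apply: cvgM; first exact: cvg_cst.
apply: cvg_det => a b.
under eq_cvg do rewrite !mxE.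
by rewrite !mxE; exact: H.
Qed.

End CvgHelpers.

Section Deriv.
Variables (R : realType) (V : normedModType R).

Lemma is_derive_lim (f : V -> R) (a u : V) (l : R) :
  (fun h : R => h^-1 *: ((f \o shift a) (h *: u) - f a)) @ 0^' --> l ->
  is_derive a u f l.
Proof.
move=> H; apply: DeriveDef; first by apply/cvg_ex; exists l.
exact: cvg_lim H.
Qed.

Lemma mxN00 p q (A : 'M[R]_(p, q)) i j : (- A) i j = - A i j.
Proof. by rewrite mxE. Qed.

Lemma quad2 m (y z : 'cV[R]_m) d :
  (y^T *m diag_mx d *m z) 0 0 = \sum_k y k 0 * d 0 k * z k 0.
Proof. by rewrite mul_mx_diag mxE; apply: eq_bigr => k _; rewrite !mxE. Qed.

Lemma quad_trick n m (N N0 : 'M[R]_n) (Bm : 'M[R]_(m, n)) (D : 'rV[R]_m)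
  (b : 'cV[R]_n) : N^T = N ->
  (b^T *m (N *m (Bm^T *m diag_mx D *m Bm) *m N0) *m b) 0 0 =
  \sum_k (Bm *m N *m b) k 0 * D 0 k * (Bm *m N0 *m b) k 0.
Proof.
move=> NT; rewrite -quad2; congr (_ 0 0).
by rewrite !trmx_mul NT ?trmxK !mulmxA.
Qed.

Lemma diff_trick n (X Y P : 'M[R]_n) (b : 'cV[R]_n) :
  (b^T *m (X - P) *m b) 0 0 - (b^T *m (Y - P) *m b) 0 0 =
  (b^T *m (X - Y) *m b) 0 0.
Proof. rewrite !mulmxBr !mulmxBl !mxE. ring. Qed.

Lemma diag_mxB m (d1 d2 : 'rV[R]_m) : diag_mx (d1 - d2) = diag_mx d1 - diag_mx d2.
Proof. by apply/matrixP => i j; rewrite !mxE mulrnBl. Qed.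

Variables (n m : nat) (ei ej : 'I_m -> 'I_n).
Hypothesis Hloop : forall k, ei k != ej k.
Variables (wf : V -> 'I_m -> R) (th v : V) (J : 'I_m -> R).
Hypothesis wpos : forall x k, 0 < wf x k.
Hypothesis HJ : forall k,
  (fun t : R => t^-1 *: (wf (t *: v + th) k - wf th k)) @ 0^' --> J k.
Hypothesis Hc : forall k, (fun t : R => wf (t *: v + th) k) @ 0^' --> wf th k.

Local Notation B := (incidence_mx R ei ej).
Local Notation Kb := (row_base (kermx B^T)).
Local Notation Pb := (projK Kb).
Local Notation Lx x := (laplacian_mx ei ej (wf x)).
Local Notation Nx x := (invmx (Lx x + Pb)).

Lemma Nsym x : (Nx x)^T = Nx x.
Proof. by rewrite trmx_inv linearD /= (lap_tr Hloop) (projK_tr Kb). Qed.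

Lemma diffN x : Nx x - Nx th =
  - (Nx x *m (B^T *m diag_mx (\row_k (wf x k - wf th k)) *m B) *m Nx th).
Proof.
have E1 : Lx x + Pb - (Lx th + Pb) = B^T *m diag_mx (\row_k (wf x k - wf th k)) *m B.
  rewrite opprD addrACA subrr addr0 !(lapE Hloop) -mulmxBl -mulmxBr -diag_mxB.
  by congr (_ *m diag_mx _ *m _); apply/rowP => k; rewrite !mxE.
rewrite -E1 mulmxBr mulmxBl mulVmx ?mul1mx; last exact: (M_unit Hloop).
by rewrite -(mulmxA (Nx x)) mulmxV ?mulmx1 ?opprB //; exact: (M_unit Hloop).
Qed.


Lemma cvg_ext (f g : R -> R) (a : R) :
  (forall t, f t = g t) -> g @ (0:R)^' --> a -> f @ (0:R)^' --> a.
Proof. by move=> /funext ->. Qed.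

Lemma HNcvg : mxcvg (0:R)^' (fun t : R => Nx (t *: v + th)) (Nx th).
Proof.
have Hd : mxcvg (0:R)^' (fun t : R => diag_mx (\row_k wf (t *: v + th) k))
    (diag_mx (\row_k wf th k)).
  move=> i j; apply: (@cvg_ext _ (fun t => wf (t *: v + th) i *+ (i == j))).
    by move=> t; rewrite !mxE.
  have -> : diag_mx (\row_k wf th k) i j = wf th i *+ (i == j) by rewrite !mxE.
  case: (i == j).
    apply: (@cvg_ext _ (fun t => wf (t *: v + th) i)); first by move=> t; rewrite mulr1n.
    by rewrite mulr1n; exact: Hc.
  apply: (@cvg_ext _ (fun t => 0)); first by move=> t; rewrite mulr0n.
  by rewrite mulr0n; exact: cvg_cst.
have HL : mxcvg (0:R)^' (fun t : R => Lx (t *: v + th)) (Lx th).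
  have -> : (fun t : R => Lx (t *: v + th)) =
      (fun t => B^T *m diag_mx (\row_k wf (t *: v + th) k) *m B).
    by apply/funext => t; rewrite (lapE Hloop).
  rewrite (lapE Hloop).
  apply: mxcvg_mul; [apply: mxcvg_mul; [exact: mxcvg_cst | exact: Hd] | exact: mxcvg_cst].
apply: mxcvg_inv.
- by move=> t; exact: (M_unit Hloop).
- exact: (M_unit Hloop).
- apply: mxcvg_add; [exact: HL | exact: mxcvg_cst].
Qed.

Lemma deriv_res (b : 'cV[R]_n) :
  is_derive th v (fun x => (b^T *m MP_pinv (Lx x) *m b) 0 0)
    (- \sum_k J k * ((B *m MP_pinv (Lx th) *m b) k 0) ^+ 2).
Proof.
apply: is_derive_lim.
rewrite (_ : (fun h => _) = (fun t : R => - \sum_k (B *m Nx (t *: v + th) *m b) k 0 *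
     (t^-1 *: (wf (t *: v + th) k - wf th k)) * (B *m Nx th *m b) k 0)); last first.
  apply/funext => t /=.
  rewrite !(pinv_lap Hloop) // diff_trick diffN mulmxN mulNmx.
  rewrite mxN00 quad_trick; last exact: Nsym.
  rewrite scalerN scaler_sumr.
  congr (- _); apply: eq_bigr => k _.
  have -> : (\row_k0 (wf (t *: v + th) k0 - wf th k0)) 0 k =
    wf (t *: v + th) k - wf th k by rewrite mxE.
  by rewrite scalerAl scalerAr.
rewrite (pinv_lap Hloop) // mulmxBr BPb subr0.
apply: cvgN; apply: cvg_sumR => k.
rewrite expr2 mulrA [J k * _]mulrC.
apply: cvgM; last exact: cvg_cst.
apply: cvgM; last exact: HJ.
apply: mxcvg_mul; [apply: mxcvg_mul; [exact: mxcvg_cst | exact: HNcvg] | exact: mxcvg_cst].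
Qed.

End Deriv.

Lemma cont_from_quot (R : realType) (f : R -> R) (a d : R) :
  (fun t : R => t^-1 *: (f t - a)) @ 0^' --> d -> f @ 0^' --> a.
Proof.
move=> HJ.
have H1 : (fun t : R => a + t * (t^-1 *: (f t - a))) @ 0^' --> a + 0 * d.
  apply: cvgD; first exact: cvg_cst.
  apply: cvgM; last exact: HJ.
  exact: nbhs_dnbhs.
rewrite mul0r addr0 in H1.
apply: cvg_trans H1; apply: near_eq_cvg; near=> t.
have tn0 : t != 0 by near: t; exact: nbhs_dnbhs_neq.
by rewrite -[t^-1 *: _]/(t^-1 * _) mulrA mulfV // mul1r addrC subrK.
Unshelve. all: by end_near.
Qed.

Theorem proposition1 (R : realType) (n m q ntheta : nat)
  (ei ej : 'I_m -> 'I_n)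
  (Hloop : forall k, ei k != ej k)
  (Hsimple : forall k k', ((ei k == ei k') && (ej k == ej k')) ||
                          ((ei k == ej k') && (ej k == ei k')) -> k = k')
  (C : 'I_m -> 'rV[R]_q)
  (p : 'rV[R]_ntheta -> 'rV[R]_q -> R)
  (Hpos : forall theta c, 0 < p theta c)
  (Hdiff : forall c th, differentiable (fun theta => p theta c) th)
  (S : {set 'I_n})
  (F : 'M[R]_#|S|)
  (HF0 : forall l, F l l = 0)
  (theta : 'rV[R]_ntheta) :
  let w := fun th (k : 'I_m) => p th (C k) in
  let Lap := fun th => laplacian_mx ei ej (w th) in
  let vS := fun l : 'I_#|S| => enum_val l in
  let loss := fun th =>
    \sum_(l < #|S|) \sum_(k < #|S|) (eff_res (Lap th) (vS l) (vS k) - F l k) ^+ 2 in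
  let J : 'M[R]_(m, ntheta) :=
    \matrix_(k, h) 'D_(basis_rv R h) (fun th => w th k) theta in
  let B := incidence_mx R ei ej in
  (forall h, derivable loss theta (basis_rv R h)) /\
  \col_(h < ntheta) 'D_(basis_rv R h) loss theta =
  \sum_(l < #|S|) \sum_(k < #|S|)
     (F l k - eff_res (Lap theta) (vS l) (vS k)) *:
     (2%:R *: (J^T *m map_mx (fun x => x ^+ 2)
                 (B *m MP_pinv (Lap theta) *m bvec R (vS l) (vS k)))).
Proof.
move=> w Lap vS loss J B.
have wpos : forall x k, 0 < w x k by move=> x k; exact: Hpos.
have HJ : forall h k, (fun t : R => t^-1 *: (w (t *: basis_rv R h + theta) k - w theta k))
    @ 0^' --> J k h.
  move=> h k.
  have -> : J k h = 'D_(basis_rv R h) (fun th => w th k) theta by rewrite /J mxE.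
  have D : derivable (fun th => w th k) theta (basis_rv R h).
    by apply: diff_derivable; exact: Hdiff.
  exact D.
have Hc : forall h k, (fun t : R => w (t *: basis_rv R h + theta) k) @ 0^' --> w theta k.
  move=> h k.
  apply: (@cont_from_quot R (fun t => w (t *: basis_rv R h + theta) k) _ (J k h)).
  exact: HJ.
pose dR h l k := - \sum_e J e h * ((B *m MP_pinv (Lap theta) *m bvec R (vS l) (vS k)) e 0) ^+ 2.
have HR : forall h l k, is_derive theta (basis_rv R h)
    (fun x => eff_res (Lap x) (vS l) (vS k)) (dR h l k).
  move=> h l k.
  exact: (deriv_res Hloop wpos (HJ h) (Hc h) (bvec R (vS l) (vS k))).
pose g l k := (fun x => eff_res (Lap x) (vS l) (vS k)) - cst (F l k).
have Eloss : loss = \sum_(l < #|S|) \sum_(k < #|S|) (g l k * g l k).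
  apply/funext => x; rewrite fct_sumE /=; apply: eq_bigr => l _.
  rewrite fct_sumE /=; apply: eq_bigr => k _.
  by rewrite expr2.
have HL : forall h, is_derive theta (basis_rv R h) loss
   (\sum_(l < #|S|) \sum_(k < #|S|) (g l k theta *: (dR h l k - 0) + g l k theta *: (dR h l k - 0))).
  move=> h0; rewrite Eloss; apply: is_derive_sum.
split; first by move=> h; case: (HL h).
apply/matrixP => h i0; rewrite (ord1 i0).
have [_ HD] := HL h.
have -> : (\col_(h < ntheta) 'D_(basis_rv R h) loss theta) h 0 =
  'D_(basis_rv R h) loss theta by rewrite mxE.
rewrite HD summxE; apply: eq_bigr => l _; rewrite summxE; apply: eq_bigr => k _.
rewrite /dR /g !mxE.
set Y := B *m MP_pinv (Lap theta) *m bvec R (vS l) (vS k).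
have -> : \sum_j J^T h j * (map_mx (fun x => x ^+ 2) Y) j 0 = \sum_e J e h * Y e 0 ^+ 2.
  by apply: eq_bigr => e _; congr (_ * _); rewrite mxE.
have -> : ((fun x => eff_res (Lap x) (vS l) (vS k)) - cst (F l k)) theta =
   eff_res (Lap theta) (vS l) (vS k) - F l k by [].
set a := eff_res _ _ _; set Sm := \sum_e _.
rewrite -[_ *: _]/(_ * _).
ring.
Qed.
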